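(* For every $t=0,1,\dots,T-2$ and every $x\in\mathbb R$, $$\bar\omega_t(x)\le\bar\psi_t(\theta,S^U_t)+\bar\psi_t\big(\theta,\max(x,S^U_t)\big)-\gamma_t\theta+\alpha\,\bar\omega_{t+1}\big(\theta+\max(x,S^U_t)\big).$$
   Context: Model. Fix an integer horizon $T\ge 2$, a discount factor $\alpha\in(0,1]$, and for $t=0,\dots,T-1$: unit ordering costs $c_t\in\mathbb R$, a salvage coefficient $c_T\in\mathbb R$, setup costs $K_t\ge 0$, functions $G_t:\mathbb R\to\mathbb R$, and independent nonnegative random demands $D_0,\dots,D_{T-1}$ with right-continuous distribution functions $F_t$ and finite means; all expectations appearing are assumed finite. Put $C_t(y)=(c_t-\alpha c_{t+1})y+G_t(y)+\alpha c_{t+1}E[D_t]$. Standing assumptions: (i) each $C_t$ is convex with $C_t(y)\to+\infty$ as $|y|\to\infty$; (ii) $K_t\ge \alpha K_{t+1}$ for $t=0,\dots,T-2$; (iii) there are constants $\gamma_t\ge 0$ with $|C_t(x)-C_t(y)|\le\gamma_t|x-y|$ for all $x,y$. Grid construction. Fix $\theta>0$, $z_m=m\theta$, $Z_\theta=\{z_m:m\in\mathbb Z\}$, $f_t(n)=F_t(z_{n+1})-F_t(z_n)$ ($n\ge -1$). $C^m_t=\min\{y: C_t(y)=\min_x C_t(x)\}$; with $z_{n_0}<C^m_t\le z_{n_0+1}$, $S^U_t=\min\{z_m\in Z_\theta: z_m\ge C^m_t,\ C_t(z_m)>C_t(z_{n_0})+K_t\}$. $s_{T-1}$ is a point with $s_{T-1}\le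 C^m_{T-1}$, $C_{T-1}(s_{T-1})=C_{T-1}(C^m_{T-1})+K_{T-1}$; $\bar I_{T-1}=s_{T-1}$. For $t=T-2,\dots,0$: $I_t=\max\{z_m\in Z_\theta: z_m<\min(\bar I_{t+1}-\theta,C^m_t)\}$, $\bar I_t=\max\{z_m\in Z_\theta: z_m\le I_t,\ C_t(z_m)>C_t(I_t)+K_t\}+\theta$. $H_{T-1}=C_{T-1}$, $S_{T-1}=C^m_{T-1}$; $V_t(y)=H_t(S_t)+K_t$ for $y<s_t$, $V_t(y)=H_t(y)$ for $y\ge s_t$. For $t=T-2,\dots,0$: $H_t(y)=C_t(y)+\alpha\sum_{n=-1}^\infty V_{t+1}(y-z_n)f_t(n)$; $S_t=\max\{z_m\in Z_\theta: I_t\le z_m\le S^U_t,\ H_t(z_m)=\min\{H_t(z_n):z_n\in Z_\theta, I_t\le z_n\le S^U_t\}\}$; $s_t=S_t$ if $K_t=0$, else $s_t=\min\{z_m\in Z_\theta:\bar I_t\le z_m\le S_t,\ H_t(z_m)\le H_t(S_t)+K_t\}$. Estimate functions. $\psi_{T-1}(x,y)=\bar\psi_{T-1}(x,y)=\gamma_{T-1}x$; $\varphi_{T-1}(x,y)=\bar\varphi_{T-1}(x,y)=0$ if $y<s_{T-1}$ and $=\gamma_{T-1}x$ if $y\ge s_{T-1}$. For $t=0,\dots,T-2$, with $n$ the integer such that $z_{n-1}\le y-s_{t+1}<z_n$: $\psi_t(x,y)=\gamma_tx$ if $y<s_{t+1}-\theta$, else $\psi_t(x,y)=\gamma_tx+\alpha\sum_{m=-1}^{n-1}\varphi_{t+1}(x,y-z_m)f_t(m)$;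 $\varphi_t(x,y)=0$ if $y<s_t$, $=\psi_t(y-s_t,y)$ if $y\ge s_t$ and $y-x<s_t$, $=\psi_t(x,y)$ if $y\ge s_t$ and $y-x\ge s_t$. Likewise $\bar\psi_t(x,y)=\gamma_tx$ if $y<s_{t+1}-\theta$, else $\bar\psi_t(x,y)=\gamma_tx+\alpha\sum_{m=-1}^{n-1}\bar\varphi_{t+1}(x,y-z_m)f_t(m)$; $\bar\varphi_t(x,y)=0$ if $y<s_t$, $=\bar\psi_t(y-s_t+\theta,y)$ if $y\ge s_t$ and $y-x<s_t$, $=\bar\psi_t(x,y)$ if $y\ge s_t$ and $y-x\ge s_t$. Error-bound functions. $\omega_{T-1}\equiv\bar\omega_{T-1}\equiv 0$, $\eta_{T-1}=0$. For $t=T-2,\dots,0$: $\omega_t(x)=\psi_t(\theta,x)-\gamma_t\theta+\alpha\sum_{n=-1}^\infty\bar\omega_{t+1}(x-z_n)f_t(n)$; $\eta_t=\bar\psi_t(\theta,S^U_t)+\omega_t(S^U_t)$; $\bar\omega_t(x)=\eta_t$ if $x\le S^U_t$ and $\bar\omega_t(x)=\max(\eta_t,\omega_t(x))$ if $x>S^U_t$. *)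

(* Defs.v *)
From Stdlib Require Import Reals ZArith ClassicalEpsilon.
From Coquelicot Require Import Coquelicot.
Open Scope R_scope.

(* Data of the model.  Indices t = 0 .. hor-1 (cost also has index hor:
   the salvage coefficient c_T).  Fd t is the distribution function F_t of
   the demand D_t and meanD t is E[D_t]. *)
Record model := Model {
  hor : nat;
  alpha : R;                (* discount factor *)
  theta : R;
  cost : nat -> R;
  setup : nat -> R;
  Gf : nat -> R -> R;
  Fd : nat -> R -> R;
  meanD : nat -> R;
  gam : nat -> R
}.

Definition Cf (M : model) (t : nat) (y : R) : R :=
  (cost M t - alpha M * cost M (t + 1)) * y + Gf M t y
  + alpha M * cost M (t + 1) * meanD M t.

Definition z (M : model) (m : Z) : R := IZR m * theta M.

Definition f (M : model) (t : nat) (n : Z) : R :=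
  Fd M t (z M (n + 1)) - Fd M t (z M n).

Definition the_min (P : R -> Prop) : R :=
  epsilon (inhabits 0) (fun y => P y /\ forall x, P x -> y <= x).

Definition grid_max (M : model) (P : R -> Prop) : R :=
  epsilon (inhabits 0)
    (fun y => (exists m, y = z M m) /\ P y /\ forall m, P (z M m) -> z M m <= y).

Definition grid_min (M : model) (P : R -> Prop) : R :=
  epsilon (inhabits 0)
    (fun y => (exists m, y = z M m) /\ P y /\ forall m, P (z M m) -> y <= z M m).

Definition gidx (M : model) (u : R) : Z :=
  epsilon (inhabits 0%Z) (fun n => z M (n - 1) <= u < z M n).

Definition gsum (a : Z -> R) : R := Series (fun j : nat => a (Z.of_nat j - 1)%Z).

Definition fsum (a : Z -> R) (N : Z) : R :=
  sum_f_R0 (fun j : nat => a (Z.of_nat j - 1)%Z) (Z.to_nat N).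

Definition Cm (M : model) (t : nat) : R :=
  the_min (fun y => forall x, Cf M t y <= Cf M t x).

Definition zn0 (M : model) (t : nat) : R := grid_max M (fun y => y < Cm M t).

Definition SU (M : model) (t : nat) : R :=
  grid_min M (fun y => Cm M t <= y /\ Cf M t y > Cf M t (zn0 M t) + setup M t).

Definition sT1 (M : model) : R :=
  epsilon (inhabits 0) (fun s => s <= Cm M (hor M - 1) /\
     Cf M (hor M - 1) s = Cf M (hor M - 1) (Cm M (hor M - 1)) + setup M (hor M - 1)).

Record stage := Stage { st_Ibar : R; st_H : R -> R; st_S : R; st_s : R }.

Definition Vof (p : stage) (Kt : R) (y : R) : R :=
  if Rlt_dec y (st_s p) then st_H p (st_S p) + Kt else st_H p y.

(* stg M k is the stage of period t = T-1-k *)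
Fixpoint stg (M : model) (k : nat) : stage :=
  match k with
  | O => Stage (sT1 M) (Cf M (hor M - 1)) (Cm M (hor M - 1)) (sT1 M)
  | S k' =>
    let t := (hor M - 2 - k')%nat in
    let p := stg M k' in
    let I := grid_max M (fun y => y < Rmin (st_Ibar p - theta M) (Cm M t)) in
    let Ib := grid_max M (fun y => y <= I /\ Cf M t y > Cf M t I + setup M t)
              + theta M in
    let V := Vof p (setup M (t + 1)) in
    let H := fun y => Cf M t y + alpha M * gsum (fun n => V (y - z M n) * f M t n) in
    let Sv := grid_max M (fun y => I <= y <= SU M t /\
                 forall m, I <= z M m <= SU M t -> H y <= H (z M m)) in
    let sv := if Req_EM_T (setup M t) 0 then Sv
              else grid_min M (fun y => Ib <= y <= Sv /\ H y <= H Sv + setup M t) in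
    Stage Ib H Sv sv
  end.

Definition stage_of (M : model) (t : nat) : stage := stg M (hor M - 1 - t).
Definition Hf (M : model) (t : nat) : R -> R := st_H (stage_of M t).
Definition Sf (M : model) (t : nat) : R := st_S (stage_of M t).
Definition sf (M : model) (t : nat) : R := st_s (stage_of M t).
Definition Vf (M : model) (t : nat) : R -> R := Vof (stage_of M t) (setup M t).

(* estimate functions: est M bar k = (psi_t, phi_t) (bar = false) or
   (psibar_t, phibar_t) (bar = true), for t = T-1-k *)
Fixpoint est (M : model) (bar : bool) (k : nat) : (R -> R -> R) * (R -> R -> R) :=
  match k with
  | O => (fun x _ => gam M (hor M - 1) * x,
          fun x y => if Rlt_dec y (sf M (hor M - 1)) then 0
                     else gam M (hor M - 1) * x)
  | S k' =>
    let t := (hor M - 2 - k')%nat in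
    let ph' := snd (est M bar k') in
    let s1 := sf M (t + 1) in
    let st := sf M t in
    let ps := fun x y =>
      if Rlt_dec y (s1 - theta M) then gam M t * x
      else gam M t * x + alpha M *
             fsum (fun m => ph' x (y - z M m) * f M t m) (gidx M (y - s1)) in
    (ps, fun x y =>
      if Rlt_dec y st then 0
      else if Rlt_dec (y - x) st then
             ps (if bar then y - st + theta M else y - st) y
           else ps x y)
  end.

Definition psi (M : model) (t : nat) := fst (est M false (hor M - 1 - t)).
Definition psib (M : model) (t : nat) := fst (est M true (hor M - 1 - t)).

(* error-bound functions: om M k = (omega_t, omegabar_t, eta_t), t = T-1-k *)
Fixpoint om (M : model) (k : nat) : (R -> R) * (R -> R) * R :=
  match k with
  | O => (fun _ => 0, fun _ => 0, 0)
  | S k' =>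
    let t := (hor M - 2 - k')%nat in
    let ob' := snd (fst (om M k')) in
    let w := fun x => psi M t (theta M) x - gam M t * theta M
                      + alpha M * gsum (fun n => ob' (x - z M n) * f M t n) in
    let eta := psib M t (theta M) (SU M t) + w (SU M t) in
    (w, fun x => if Rle_dec x (SU M t) then eta else Rmax eta (w x), eta)
  end.

Definition omega (M : model) (t : nat) : R -> R := fst (fst (om M (hor M - 1 - t))).
Definition omegab (M : model) (t : nat) : R -> R := snd (fst (om M (hor M - 1 - t))).
Definition eta (M : model) (t : nat) : R := snd (om M (hor M - 1 - t)).

(* F is the distribution function of a nonnegative random variable
   with finite mean m = E[D] = int_0^oo (1 - F) *)
Definition nonneg_distribution (F : R -> R) (m : R) : Prop :=
  (forall x y, x <= y -> F x <= F y) /\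
  (forall x, filterlim F (at_right x) (locally (F x))) /\
  (forall x, x < 0 -> F x = 0) /\
  filterlim F (Rbar_locally p_infty) (locally 1) /\
  is_RInt_gen (fun x => 1 - F x) (at_point 0) (Rbar_locally p_infty) m.

Definition convex (g : R -> R) : Prop :=
  forall x y l, 0 <= l <= 1 -> g (l * x + (1 - l) * y) <= l * g x + (1 - l) * g y.

Definition coercive (g : R -> R) : Prop :=
  forall A, exists B, forall y, B < Rabs y -> A < g y.

Definition standing_assumptions (M : model) : Prop :=
  (2 <= hor M)%nat /\
  0 < alpha M <= 1 /\
  0 < theta M /\
  (forall t, (t <= hor M - 1)%nat -> 0 <= setup M t) /\
  (forall t, (t <= hor M - 1)%nat -> nonneg_distribution (Fd M t) (meanD M t)) /\
  (forall t, (t <= hor M - 1)%nat -> convex (Cf M t) /\ coercive (Cf M t)) /\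
  (forall t, (t <= hor M - 2)%nat -> setup M t >= alpha M * setup M (t + 1)) /\
  (forall t, (t <= hor M - 1)%nat -> 0 <= gam M t /\
     forall x y, Rabs (Cf M t x - Cf M t y) <= gam M t * Rabs (x - y)) /\
  (* all expectations appearing are finite *)
  (forall t, (t <= hor M - 2)%nat -> forall y,
     ex_series (fun j : nat => Rabs (Vf M (t + 1) (y - z M (Z.of_nat j - 1))
                                     * f M t (Z.of_nat j - 1)))) /\
  (forall t, (t <= hor M - 2)%nat -> forall x,
     ex_series (fun j : nat => Rabs (omegab M (t + 1) (x - z M (Z.of_nat j - 1))
                                     * f M t (Z.of_nat j - 1)))).

(* Main.v *)
From Pilot Require Import Defs.
From Stdlib Require Import Reals Lra Lia ZArith ClassicalEpsilon.
From Coquelicot Require Import Coquelicot.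
Import Pilot.Defs.
Open Scope R_scope.

Lemma z_le (M : model) m n : 0 < theta M -> (m <= n)%Z -> z M m <= z M n.
Proof. intros Ht H. unfold z. apply Rmult_le_compat_r; [lra|]. apply IZR_le; auto. Qed.

Lemma z_lt_inv (M : model) m n : 0 < theta M -> z M m < z M n -> (m < n)%Z.
Proof. intros Ht H. destruct (Z_lt_le_dec m n) as [h|h]; auto.
  apply (z_le M) in h; auto. lra. Qed.

Lemma gidx_spec (M : model) u : 0 < theta M -> z M (gidx M u - 1) <= u < z M (gidx M u).
Proof. intros Ht. unfold gidx. apply epsilon_spec.
  exists (up (u / theta M)). destruct (archimed (u / theta M)) as [h1 h2].
  unfold z. rewrite minus_IZR. split.
  - assert (IZR (up (u/theta M)) - 1 <= u / theta M) by lra.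
    apply Rmult_le_compat_r with (r := theta M) in H; [|lra].
    unfold Rdiv in H. rewrite Rmult_assoc, Rinv_l in H; lra.
  - apply Rmult_lt_compat_r with (r := theta M) in h1; [|lra].
    unfold Rdiv in h1. rewrite Rmult_assoc, Rinv_l in h1; lra.
Qed.

Lemma gidx_mono (M : model) u v : 0 < theta M -> u <= v -> (gidx M u <= gidx M v)%Z.
Proof. intros Ht H. destruct (gidx_spec M u Ht), (gidx_spec M v Ht).
  destruct (Z_le_gt_dec (gidx M u) (gidx M v)) as [h|h]; auto.
  assert (gidx M v <= gidx M u - 1)%Z by lia.
  apply (z_le M) in H4; auto. lra. Qed.

Lemma sum_mono_len (g : nat -> R) n d : (forall j, 0 <= g j) ->
  sum_f_R0 g n <= sum_f_R0 g (n + d).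
Proof. intros Hg. induction d. rewrite Nat.add_0_r; lra.
  rewrite Nat.add_succ_r. simpl. specialize (Hg (S (n+d))). lra. Qed.

Lemma fsum_nonneg a N : (forall m, 0 <= a m) -> 0 <= fsum a N.
Proof. intros H. unfold fsum. apply cond_pos_sum. intros; apply H. Qed.

Lemma fsum_le a b N : (forall m, a m <= b m) -> fsum a N <= fsum b N.
Proof. intros H. unfold fsum. apply sum_Rle. intros; apply H. Qed.

Lemma fsum_monoN a N1 N2 : (forall m, 0 <= a m) -> (N1 <= N2)%Z -> fsum a N1 <= fsum a N2.
Proof. intros H HN. unfold fsum.
  replace (Z.to_nat N2) with (Z.to_nat N1 + (Z.to_nat N2 - Z.to_nat N1))%nat by lia.
  apply sum_mono_len. intros; apply H. Qed.

Lemma est_S_fst M bar k x y : fst (est M bar (S k)) x y =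
  (if Rlt_dec y (sf M ((hor M - 2 - k) + 1) - theta M) then gam M (hor M - 2 - k) * x
   else gam M (hor M - 2 - k) * x + alpha M *
     fsum (fun m => snd (est M bar k) x (y - z M m) * f M (hor M - 2 - k) m)
          (gidx M (y - sf M ((hor M - 2 - k) + 1)))).
Proof. reflexivity. Qed.

Lemma est_S_snd M bar k x y : snd (est M bar (S k)) x y =
  (if Rlt_dec y (sf M (hor M - 2 - k)) then 0
   else if Rlt_dec (y - x) (sf M (hor M - 2 - k)) then
     fst (est M bar (S k)) (if bar then y - sf M (hor M - 2 - k) + theta M
                            else y - sf M (hor M - 2 - k)) y
   else fst (est M bar (S k)) x y).
Proof. reflexivity. Qed.

Lemma est_0_fst M bar x y : fst (est M bar 0) x y = gam M (hor M - 1) * x.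
Proof. reflexivity. Qed.
Lemma est_0_snd M bar x y : snd (est M bar 0) x y =
  if Rlt_dec y (sf M (hor M - 1)) then 0 else gam M (hor M - 1) * x.
Proof. reflexivity. Qed.
Definition Hyps (M : model) : Prop :=
  (1 <= hor M)%nat /\ 0 <= alpha M /\ 0 < theta M /\
  (forall t, (t <= hor M - 1)%nat -> 0 <= gam M t) /\
  (forall t n, (t <= hor M - 1)%nat -> 0 <= f M t n).

Definition SP (g : R -> R -> R) : Prop :=
  (forall x y, 0 <= x -> 0 <= g x y) /\
  (forall x x' y, 0 <= x <= x' -> g x y <= g x' y).

Lemma fst_S_props M bar k : Hyps M -> SP (snd (est M bar k)) -> SP (fst (est M bar (S k))).
Proof. intros [Hh [Ha [Ht [Hg Hf]]]] [P1 P2].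
  assert (G := Hg (hor M - 2 - k)%nat ltac:(lia)).
  assert (F := Hf (hor M - 2 - k)%nat). split.
  - intros x y Hx. rewrite est_S_fst. destruct Rlt_dec.
    + apply Rmult_le_pos; auto.
    + apply Rplus_le_le_0_compat; [apply Rmult_le_pos; auto|].
      apply Rmult_le_pos; auto. apply fsum_nonneg. intros m.
      apply Rmult_le_pos; auto. apply F; lia.
  - intros x x' y Hx. rewrite !est_S_fst. destruct Rlt_dec.
    + apply Rmult_le_compat_l; lra.
    + apply Rplus_le_compat; [apply Rmult_le_compat_l; lra|].
      apply Rmult_le_compat_l; auto. apply fsum_le. intros m.
      apply Rmult_le_compat_r; [apply F; lia|]. apply P2; auto.
Qed.

Lemma snd_props M bar k : Hyps M -> SP (snd (est M bar k)).
Proof. intros HH. pose proof HH as [Hh [Ha [Ht [Hg Hf]]]].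
  assert (G0 := Hg (hor M - 1)%nat ltac:(lia)).
  induction k.
  - split.
    + intros x y Hx. rewrite est_0_snd. destruct Rlt_dec; [lra|]. apply Rmult_le_pos; auto.
    + intros x x' y Hx. rewrite !est_0_snd. destruct Rlt_dec; [lra|].
      apply Rmult_le_compat_l; lra.
  - destruct (fst_S_props M bar k HH IHk) as [Q1 Q2]. split.
    + intros x y Hx. rewrite est_S_snd. destruct Rlt_dec; [lra|].
      destruct Rlt_dec; apply Q1; auto. destruct bar; lra.
    + intros x x' y Hx. rewrite !est_S_snd. destruct Rlt_dec; [lra|].
      destruct (Rlt_dec (y - x)), (Rlt_dec (y - x')).
      * lra.
      * lra.
      * apply Q2. destruct bar; lra.
      * apply Q2; auto.
Qed.

Lemma fst_props M bar k : Hyps M -> SP (fst (est M bar k)).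
Proof. intros HH. destruct k.
  - pose proof HH as [Hh [Ha [Ht [Hg Hf]]]].
    assert (G0 := Hg (hor M - 1)%nat ltac:(lia)). split.
    + intros x y Hx. rewrite est_0_fst. apply Rmult_le_pos; auto.
    + intros x x' y Hx. rewrite !est_0_fst. apply Rmult_le_compat_l; lra.
  - apply fst_S_props; auto. apply snd_props; auto.
Qed.

Definition YM (g : R -> R -> R) : Prop :=
  forall x y y', 0 <= x -> y <= y' -> g x y <= g x y'.

Lemma fst_S_ym M k : Hyps M -> YM (snd (est M false k)) -> YM (fst (est M false (S k))).
Proof. intros HH IH. pose proof HH as [Hh [Ha [Ht [Hg Hf]]]].
  destruct (snd_props M false k HH) as [P1 P2].
  assert (G := Hg (hor M - 2 - k)%nat ltac:(lia)).
  assert (F := Hf (hor M - 2 - k)%nat).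
  intros x y y' Hx Hy. rewrite !est_S_fst.
  destruct (Rlt_dec y), (Rlt_dec y').
  - lra.
  - assert (0 <= alpha M * fsum (fun m => snd (est M false k) x (y' - z M m) * f M (hor M - 2 - k) m)
      (gidx M (y' - sf M (hor M - 2 - k + 1)))); [|lra].
    apply Rmult_le_pos; auto. apply fsum_nonneg. intros m.
    apply Rmult_le_pos; auto. apply F; lia.
  - lra.
  - apply Rplus_le_compat_l. apply Rmult_le_compat_l; auto.
    eapply Rle_trans. apply fsum_monoN with (N2 := gidx M (y' - sf M (hor M - 2 - k + 1))).
    + intros m. apply Rmult_le_pos; auto. apply F; lia.
    + apply gidx_mono; auto; lra.
    + apply fsum_le. intros m. apply Rmult_le_compat_r. apply F; lia. apply IH; auto; lra.
Qed.

Lemma snd_ym M k : Hyps M -> YM (snd (est M false k)).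
Proof. intros HH. pose proof HH as [Hh [Ha [Ht [Hg Hf]]]].
  assert (G0 := Hg (hor M - 1)%nat ltac:(lia)).
  induction k.
  - intros x y y' Hx Hy. rewrite !est_0_snd. destruct Rlt_dec, Rlt_dec; try lra.
    apply Rmult_le_pos; auto.
  - pose proof (fst_S_ym M k HH IHk) as Y.
    destruct (fst_S_props M false k HH (snd_props M false k HH)) as [Q1 Q2].
    intros x y y' Hx Hy. rewrite !est_S_snd.
    destruct (Rlt_dec y).
    + destruct Rlt_dec; [lra|]. destruct Rlt_dec; apply Q1; lra.
    + destruct (Rlt_dec y'); [lra|].
      destruct (Rlt_dec (y - x)), (Rlt_dec (y' - x)).
      * eapply Rle_trans. apply Q2 with (x' := y' - sf M (hor M - 2 - k)); lra.
        apply Y; lra.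
      * eapply Rle_trans. apply Q2 with (x' := x); lra. apply Y; lra.
      * lra.
      * apply Y; lra.
Qed.

Lemma fst_ym M k : Hyps M -> YM (fst (est M false k)).
Proof. intros HH. destruct k.
  - intros x y y' _ _. rewrite !est_0_fst. lra.
  - apply fst_S_ym; auto. apply snd_ym; auto.
Qed.

Lemma snd_cmp M k : Hyps M -> forall x y, 0 <= x ->
  snd (est M false k) x y <= snd (est M true k) x y.
Proof. intros HH. pose proof HH as [Hh [Ha [Ht [Hg Hf]]]].
  induction k.
  - intros. rewrite !est_0_snd. lra.
  - assert (FC : forall x y, 0 <= x -> fst (est M false (S k)) x y <= fst (est M true (S k)) x y).
    { intros x y Hx. rewrite !est_S_fst. destruct Rlt_dec; [lra|].
      apply Rplus_le_compat_l. apply Rmult_le_compat_l; auto. apply fsum_le.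
      intros m. apply Rmult_le_compat_r. apply Hf; lia. apply IHk; auto. }
    destruct (fst_props M true (S k) HH) as [Q1 Q2].
    intros x y Hx. rewrite !est_S_snd. destruct Rlt_dec; [lra|].
    destruct Rlt_dec.
    + eapply Rle_trans. apply FC; lra. apply Q2; lra.
    + apply FC; auto.
Qed.

Lemma fst_cmp M k : Hyps M -> forall x y, 0 <= x ->
  fst (est M false k) x y <= fst (est M true k) x y.
Proof. intros HH. pose proof HH as [Hh [Ha [Ht [Hg Hf]]]]. destruct k.
  - intros. rewrite !est_0_fst. lra.
  - intros x y Hx. rewrite !est_S_fst. destruct Rlt_dec; [lra|].
    apply Rplus_le_compat_l. apply Rmult_le_compat_l; auto. apply fsum_le.
    intros m. apply Rmult_le_compat_r. apply Hf; lia. apply snd_cmp; auto.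
Qed.
Lemma omegab_top M x : omegab M (hor M - 1) x = 0.
Proof. unfold omegab. rewrite Nat.sub_diag. reflexivity. Qed.

Lemma omega_eq M t x : (2 <= hor M)%nat -> (t <= hor M - 2)%nat ->
  omega M t x = psi M t (theta M) x - gam M t * theta M
     + alpha M * gsum (fun n => omegab M (t + 1) (x - z M n) * f M t n).
Proof. intros H2 H. unfold omega, omegab.
  replace (hor M - 1 - t)%nat with (S (hor M - 2 - t)) by lia.
  replace (hor M - 1 - (t + 1))%nat with (hor M - 2 - t)%nat by lia.
  cbn [om fst snd].
  replace (hor M - 2 - (hor M - 2 - t))%nat with t by lia. reflexivity. Qed.

Lemma omegab_eq M t x : (2 <= hor M)%nat -> (t <= hor M - 2)%nat ->
  omegab M t x = if Rle_dec x (SU M t) then psib M t (theta M) (SU M t) + omega M t (SU M t)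
    else Rmax (psib M t (theta M) (SU M t) + omega M t (SU M t)) (omega M t x).
Proof. intros H2 H. unfold omegab, omega.
  replace (hor M - 1 - t)%nat with (S (hor M - 2 - t)) by lia.
  cbn [om fst snd].
  replace (hor M - 2 - (hor M - 2 - t))%nat with t by lia. reflexivity. Qed.

Lemma psi_ge M t x y : (2 <= hor M)%nat -> Hyps M -> (t <= hor M - 2)%nat -> 0 <= x ->
  gam M t * x <= psi M t x y.
Proof. intros H2 HH H Hx. pose proof HH as [Hh [Ha [Ht [Hg Hf]]]]. unfold psi.
  replace (hor M - 1 - t)%nat with (S (hor M - 2 - t)) by lia.
  rewrite est_S_fst. replace (hor M - 2 - (hor M - 2 - t))%nat with t by lia.
  destruct Rlt_dec; [lra|].
  assert (0 <= alpha M * fsum (fun m => snd (est M false (hor M - 2 - t)) x (y - z M m) * f M t m)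
    (gidx M (y - sf M (t + 1)))); [|lra].
  apply Rmult_le_pos; auto. apply fsum_nonneg. intros m.
  apply Rmult_le_pos. apply snd_props; auto. apply Hf; lia.
Qed.
Lemma F_le_1 F m : nonneg_distribution F m -> forall a, F a <= 1.
Proof. intros [Hm [_ [_ [Hl _]]]] a. destruct (Rle_dec (F a) 1) as [h|h]; auto.
  exfalso. apply Rnot_le_lt in h.
  apply filterlim_locally with (eps := mkposreal (F a - 1) ltac:(lra)) in Hl.
  destruct Hl as [B HB]. set (x := Rmax a B + 1).
  specialize (HB x ltac:(unfold x; pose proof (Rmax_r a B); lra)).
  assert (F a <= F x) by (apply Hm; unfold x; pose proof (Rmax_l a B); lra).
  unfold ball in HB; simpl in HB. unfold AbsRing_ball, abs, minus, plus, opp in HB; simpl in HB.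
  apply Rabs_lt_between in HB. simpl in HB. lra.
Qed.

Lemma f_tele M t N : sum_f_R0 (fun j => f M t (Z.of_nat j - 1)) N =
  Fd M t (z M (Z.of_nat N)) - Fd M t (z M (-1)).
Proof. induction N.
  - simpl. unfold f. reflexivity.
  - rewrite tech5, IHN. cbv beta. unfold f.
    replace (Z.of_nat (S N) - 1 + 1)%Z with (Z.of_nat (S N)) by lia.
    replace (Z.of_nat (S N) - 1)%Z with (Z.of_nat N) by lia. lra.
Qed.

Lemma series_le_const (a : nat -> R) c : ex_series a -> (forall N, sum_f_R0 a N <= c) ->
  Series a <= c.
Proof. intros He Hb. apply Series_correct in He.
  assert (L : is_lim_seq (sum_n a) (Series a)) by exact He.
  pose proof (is_lim_seq_le (sum_n a) (fun _ => c) (Series a) c) as K.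
  simpl in K. apply K; auto. intros n; rewrite sum_n_Reals; auto.
  apply is_lim_seq_const.
Qed.

Lemma series_mono (a b : nat -> R) : ex_series a -> ex_series b -> (forall n, a n <= b n) ->
  Series a <= Series b.
Proof. intros Ha Hb H. apply Series_correct in Ha. apply Series_correct in Hb.
  assert (La : is_lim_seq (sum_n a) (Series a)) by exact Ha.
  assert (Lb : is_lim_seq (sum_n b) (Series b)) by exact Hb.
  pose proof (is_lim_seq_le (sum_n a) (sum_n b) (Series a) (Series b)) as K.
  simpl in K. apply K; auto. intros n; rewrite !sum_n_Reals. apply sum_Rle; auto.
Qed.

Lemma series_nonneg (a : nat -> R) : ex_series a -> (forall n, 0 <= a n) -> 0 <= Series a.
Proof. intros Ha H. apply Series_correct in Ha.
  assert (La : is_lim_seq (sum_n a) (Series a)) by exact Ha.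
  pose proof (is_lim_seq_le (fun _ => 0) (sum_n a) 0 (Series a)) as K.
  simpl in K. apply K; auto. intros n; rewrite !sum_n_Reals. apply cond_pos_sum; auto.
  apply is_lim_seq_const.
Qed.
Lemma SA_Hyps M : standing_assumptions M -> Hyps M.
Proof. intros [Hh [Ha [Ht [Hs [Hd [Hc [HK [Hg _]]]]]]]].
  split; [lia|]. split; [lra|]. split; [lra|]. split.
  - intros t H. apply (Hg t H).
  - intros t n H. destruct (Hd t H) as [Hm _]. unfold f.
    assert (Fd M t (z M n) <= Fd M t (z M (n + 1))); [|lra].
    apply Hm. apply z_le; [lra|lia].
Qed.

Definition OB M t : Prop := (forall x, 0 <= omegab M t x) /\
  (forall x x', x <= x' -> omegab M t x <= omegab M t x').

Lemma sum_scal_l (c : R) (g : nat -> R) N : sum_f_R0 (fun j => c * g j) N = c * sum_f_R0 g N.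
Proof. induction N; simpl; [lra|]. rewrite IHN. lra. Qed.

Lemma step_facts M t : standing_assumptions M -> (t <= hor M - 2)%nat -> OB M (t + 1) ->
  (forall u, gsum (fun n => omegab M (t + 1) (u - z M n) * f M t n) <= omegab M (t+1) (u + theta M)) /\
  (forall u, 0 <= omega M t u) /\
  (forall u v, u <= v -> omega M t u <= psib M t (theta M) v - gam M t * theta M
                              + alpha M * omegab M (t + 1) (v + theta M)) /\
  (forall u v, u <= v -> omega M t u <= omega M t v).
Proof. intros SA Ht [O1 O2]. pose proof (SA_Hyps M SA) as HH.
  pose proof HH as [Hh [Ha [Hth [Hg Hf]]]].
  pose proof SA as [H2 [_ [_ [_ [Hd [_ [_ [_ [_ Hser]]]]]]]]].
  assert (EX : forall u, ex_series (fun j => omegab M (t + 1) (u - z M (Z.of_nat j - 1)) * f M t (Z.of_nat j - 1))).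
  { intros u. apply ex_series_Rabs. apply (Hser t Ht u). }
  assert (Ft : forall n, 0 <= f M t n) by (intros; apply Hf; lia).
  assert (GB : forall u, gsum (fun n => omegab M (t + 1) (u - z M n) * f M t n) <= omegab M (t+1) (u + theta M)).
  { intros u. unfold gsum. apply series_le_const; [apply EX|].
    intros N. eapply Rle_trans.
    - apply sum_Rle with (Bn := fun j => omegab M (t+1) (u + theta M) * f M t (Z.of_nat j - 1)).
      intros n _. apply Rmult_le_compat_r; auto. apply O2.
      assert (-1 <= Z.of_nat n - 1)%Z by lia. apply (z_le M) in H; auto.
      unfold z at 1 in H. simpl in H. lra.
    - rewrite sum_scal_l, f_tele.
      destruct (Hd t ltac:(lia)) as [Hm [_ [H0 _]]].
      rewrite (H0 (z M (-1))) by (unfold z; simpl; lra).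
      pose proof (F_le_1 _ _ (Hd t ltac:(lia)) (z M (Z.of_nat N))).
      pose proof (O1 (u + theta M)).
      assert (0 <= Fd M t (z M (Z.of_nat N))) by (rewrite <- (H0 (z M (-1))) by (unfold z; simpl; lra); apply Hm; apply z_le; lia || lra).
      nra. }
  assert (GM : forall u v, u <= v -> gsum (fun n => omegab M (t + 1) (u - z M n) * f M t n)
        <= gsum (fun n => omegab M (t + 1) (v - z M n) * f M t n)).
  { intros u v Huv. unfold gsum. apply series_mono; auto. intros n.
    apply Rmult_le_compat_r; auto. apply O2. lra. }
  assert (G0 : forall u, 0 <= gsum (fun n => omegab M (t + 1) (u - z M n) * f M t n)).
  { intros u. unfold gsum. apply series_nonneg; auto. intros n. apply Rmult_le_pos; auto. }
  split; [exact GB|]. split; [|split].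
  - intros u. rewrite omega_eq by auto.
    pose proof (psi_ge M t (theta M) u H2 HH Ht ltac:(lra)). pose proof (G0 u).
    assert (0 <= alpha M * gsum (fun n => omegab M (t + 1) (u - z M n) * f M t n)) by (apply Rmult_le_pos; auto).
    lra.
  - intros u v Huv. rewrite omega_eq by auto.
    assert (psi M t (theta M) u <= psib M t (theta M) v).
    { unfold psi, psib. apply Rle_trans with (fst (est M false (hor M - 1 - t)) (theta M) v).
      apply fst_ym; auto; lra. apply fst_cmp; auto; lra. }
    assert (gsum (fun n => omegab M (t + 1) (u - z M n) * f M t n) <= omegab M (t+1) (v + theta M)).
    { eapply Rle_trans. apply GB. apply O2. lra. }
    assert (alpha M * gsum (fun n => omegab M (t + 1) (u - z M n) * f M t n) <= alpha M * omegab M (t+1) (v + theta M)) by (apply Rmult_le_compat_l; auto).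
    lra.
  - intros u v Huv. rewrite !omega_eq by auto.
    assert (psi M t (theta M) u <= psi M t (theta M) v).
    { unfold psi. apply fst_ym; auto; lra. }
    assert (alpha M * gsum (fun n => omegab M (t + 1) (u - z M n) * f M t n) <= alpha M * gsum (fun n => omegab M (t + 1) (v - z M n) * f M t n)) by (apply Rmult_le_compat_l; auto).
    lra.
Qed.

Lemma psib_nn M t y : Hyps M -> 0 <= psib M t (theta M) y.
Proof. intros HH. pose proof HH as [_ [_ [Ht _]]]. unfold psib. apply fst_props; auto; lra. Qed.

Lemma OB_all M : standing_assumptions M -> forall t, (t <= hor M - 1)%nat -> OB M t.
Proof. intros SA. pose proof (SA_Hyps M SA) as HH. pose proof SA as [H2 _].
  assert (forall d t, (hor M - 1 - t)%nat = d -> (t <= hor M - 1)%nat -> OB M t); [|eauto].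
  induction d; intros t Hd Ht.
  - replace t with (hor M - 1)%nat by lia. split; intros; rewrite !omegab_top; lra.
  - assert (Ht2 : (t <= hor M - 2)%nat) by lia.
    assert (IH : OB M (t + 1)) by (apply IHd; lia).
    destruct (step_facts M t SA Ht2 IH) as [_ [W0 [W1 W2]]].
    pose proof (psib_nn M t (SU M t) HH). pose proof (W0 (SU M t)).
    split.
    + intros x. rewrite omegab_eq by auto. destruct Rle_dec; [lra|].
      pose proof (Rmax_l (psib M t (theta M) (SU M t) + omega M t (SU M t)) (omega M t x)). lra.
    + intros x x' Hx. rewrite !omegab_eq by auto.
      set (e := psib M t (theta M) (SU M t) + omega M t (SU M t)).
      destruct (Rle_dec x (SU M t)), (Rle_dec x' (SU M t)).
      * lra.
      * apply Rmax_l.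
      * lra.
      * apply Rle_max_compat_l. auto.
Qed.

Theorem lemma4p8 (M : model) :
  standing_assumptions M ->
  forall t : nat, (t <= hor M - 2)%nat -> forall x : R,
    omegab M t x <=
      psib M t (theta M) (SU M t) + psib M t (theta M) (Rmax x (SU M t))
      - gam M t * theta M
      + alpha M * omegab M (t + 1) (theta M + Rmax x (SU M t)).
Proof.
  intros SA t Ht x. pose proof (SA_Hyps M SA) as HH. pose proof SA as [H2 _].
  assert (IH : OB M (t + 1)) by (apply OB_all; auto; lia).
  destruct (step_facts M t SA Ht IH) as [_ [W0 [W1 W2]]].
  pose proof (psib_nn M t (SU M t) HH).
  rewrite omegab_eq by auto. rewrite (Rplus_comm (theta M)).
  destruct Rle_dec.
  - rewrite (Rmax_right x (SU M t)) by auto. pose proof (W1 (SU M t) (SU M t) (Rle_refl _)). lra.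
  - match goal with h : ~ _ <= _ |- _ => apply Rnot_le_lt in h end. rewrite (Rmax_left x (SU M t)) by lra. apply Rmax_lub.
    + pose proof (W1 (SU M t) x ltac:(lra)). lra.
    + pose proof (W1 x x (Rle_refl _)). lra.
Qed.
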